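(* Let $A$ and $B$ be hyperbolic elements in $\mathrm{Sp}(1,1)$ having a common fixed point on $\partial\mathbf H^1_{\mathbb H}$. Then (the images of) $A$ and $B$ form a strongly doubly reversible pair in $\mathrm{PSp}(1,1)$ if and only if $A$ and $B$ have the same fixed points.
   Context: $\mathrm{Sp}(1,1)$ is the group of $2\times 2$ quaternionic matrices preserving the Hermitian form $\langle \mathbf z,\mathbf w\rangle=\bar w_2 z_1+\bar w_1 z_2$ on the right $\mathbb H$-vector space $\mathbb H^2$, $\mathrm{PSp}(1,1)=\mathrm{Sp}(1,1)/\{\pm I\}$, and $\partial\mathbf H^1_{\mathbb H}$ is the set of right quaternionic lines of nonzero null vectors. An element is hyperbolic if it has exactly two fixed points on $\partial\mathbf H^1_{\mathbb H}$. A pair $(g_1,g_2)$ in $\mathrm{PSp}(1,1)$ is strongly doubly reversible if there is $g\in\mathrm{PSp}(1,1)$ with $g^2=1$, $g g_1 g^{-1}=g_1^{-1}$ and $g g_2 g^{-1}=g_2^{-1}$. *)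

(* Defs.v *)
From HB Require Import structures.
From mathcomp Require Import all_boot all_order all_algebra.
From mathcomp Require Import reals.
Set Implicit Arguments. Unset Strict Implicit. Unset Printing Implicit Defensive.
Import Order.TTheory GRing.Theory Num.Theory.
Local Open Scope ring_scope.

Section Quaternions.
Variable R : realType.

(** Real quaternions q0 + q1 i + q2 j + q3 k, with i^2=j^2=k^2=ijk=-1. *)
Record quat := Quat { q0 : R; q1 : R; q2 : R; q3 : R }.

Definition qzero : quat := Quat 0 0 0 0.
Definition qone : quat := Quat 1 0 0 0.
Definition qadd (a b : quat) : quat :=
  Quat (q0 a + q0 b) (q1 a + q1 b) (q2 a + q2 b) (q3 a + q3 b).
Definition qopp (a : quat) : quat := Quat (- q0 a) (- q1 a) (- q2 a) (- q3 a).
Definition qmul (a b : quat) : quat :=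
  Quat (q0 a * q0 b - q1 a * q1 b - q2 a * q2 b - q3 a * q3 b)
       (q0 a * q1 b + q1 a * q0 b + q2 a * q3 b - q3 a * q2 b)
       (q0 a * q2 b - q1 a * q3 b + q2 a * q0 b + q3 a * q1 b)
       (q0 a * q3 b + q1 a * q2 b - q2 a * q1 b + q3 a * q0 b).
Definition qconj (a : quat) : quat := Quat (q0 a) (- q1 a) (- q2 a) (- q3 a).

Definition hvec := (quat * quat)%type.
Definition vzero : hvec := (qzero, qzero).
Definition vscale (z : hvec) (l : quat) : hvec := (qmul z.1 l, qmul z.2 l).

Record hmat := HMat { m11 : quat; m12 : quat; m21 : quat; m22 : quat }.
Definition mone : hmat := HMat qone qzero qzero qone.
Definition mopp (A : hmat) : hmat :=
  HMat (qopp (m11 A)) (qopp (m12 A)) (qopp (m21 A)) (qopp (m22 A)).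
Definition mmul (A B : hmat) : hmat :=
  HMat (qadd (qmul (m11 A) (m11 B)) (qmul (m12 A) (m21 B)))
       (qadd (qmul (m11 A) (m12 B)) (qmul (m12 A) (m22 B)))
       (qadd (qmul (m21 A) (m11 B)) (qmul (m22 A) (m21 B)))
       (qadd (qmul (m21 A) (m12 B)) (qmul (m22 A) (m22 B))).
Definition mact (A : hmat) (z : hvec) : hvec :=
  (qadd (qmul (m11 A) z.1) (qmul (m12 A) z.2),
   qadd (qmul (m21 A) z.1) (qmul (m22 A) z.2)).

Definition is_inv (A B : hmat) : Prop := mmul A B = mone /\ mmul B A = mone.

Definition hform (z w : hvec) : quat :=
  qadd (qmul (qconj w.2) z.1) (qmul (qconj w.1) z.2).

Definition Sp11 (A : hmat) : Prop :=
  (exists B, is_inv A B) /\ forall z w, hform (mact A z) (mact A w) = hform z w.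

(** Equality in PSp(1,1) = Sp(1,1)/{+-I}. *)
Definition pm_eq (A B : hmat) : Prop := A = B \/ A = mopp B.

(** Nonzero null vectors; a point of the boundary is the right line z.H. *)
Definition null_nz (z : hvec) : Prop := z <> vzero /\ hform z z = qzero.
Definition same_line (z w : hvec) : Prop := exists mu : quat, w = vscale z mu.

(** z represents a boundary point fixed by A (A z lies on the line z.H).
    This condition depends only on the line z.H. *)
Definition fixes_bd (A : hmat) (z : hvec) : Prop :=
  null_nz z /\ exists l : quat, mact A z = vscale z l.

Definition hyperbolic (A : hmat) : Prop :=
  exists z1 z2, fixes_bd A z1 /\ fixes_bd A z2 /\ ~ same_line z1 z2 /\
    forall z, fixes_bd A z -> same_line z1 z \/ same_line z2 z.

Definition strongly_doubly_reversible (A B : hmat) : Prop :=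
  exists G Gi Ai Bi, Sp11 G /\ is_inv G Gi /\ is_inv A Ai /\ is_inv B Bi /\
    pm_eq (mmul G G) mone /\
    pm_eq (mmul (mmul G A) Gi) Ai /\
    pm_eq (mmul (mmul G B) Gi) Bi.

End Quaternions.

(* Main.v *)
From HB Require Import structures.
Require Import Defs.
From mathcomp Require Import all_boot all_order all_algebra.
From mathcomp Require Import reals ring lra.
From Stdlib Require Classical_Prop.
Set Implicit Arguments. Unset Strict Implicit. Unset Printing Implicit Defensive.
Import Order.TTheory GRing.Theory Num.Theory.
Local Open Scope ring_scope.

Section Q.
Variable R : realType.
Local Notation quat := (quat R).

Definition q2t (q : quat) := (q0 q, q1 q, q2 q, q3 q).
Definition t2q (t : R * R * R * R) : quat := let: (a, b, c, d) := t in Quat a b c d.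
Lemma q2tK : cancel q2t t2q. Proof. by case. Qed.
HB.instance Definition _ := Choice.copy quat (can_type q2tK).

Lemma quat_eq (a b : quat) : q0 a = q0 b -> q1 a = q1 b -> q2 a = q2 b -> q3 a = q3 b -> a = b.
Proof. by case: a; case: b => /= ? ? ? ? ? ? ? ? -> -> -> ->. Qed.

Ltac qring := repeat match goal with x : quat |- _ => destruct x end;
  apply: quat_eq; rewrite /= ; ring.

Lemma qaddA : associative (@qadd R). Proof. move=> *; qring. Qed.
Lemma qaddC : commutative (@qadd R). Proof. move=> *; qring. Qed.
Lemma qadd0 : left_id (@qzero R) (@qadd R). Proof. move=> *; qring. Qed.
Lemma qaddN : left_inverse (@qzero R) (@qopp R) (@qadd R). Proof. move=> *; qring. Qed.
HB.instance Definition _ := GRing.isZmodule.Build quat qaddA qaddC qadd0 qaddN.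

Lemma qmulA : associative (@qmul R). Proof. move=> *; qring. Qed.
Lemma qmul1 : left_id (@qone R) (@qmul R). Proof. move=> *; qring. Qed.
Lemma qmulr1 : right_id (@qone R) (@qmul R). Proof. move=> *; qring. Qed.
Lemma qmulDl : left_distributive (@qmul R) (@qadd R). Proof. move=> *; qring. Qed.
Lemma qmulDr : right_distributive (@qmul R) (@qadd R). Proof. move=> *; qring. Qed.
Lemma qone_neq0 : (@qone R) != 0.
Proof. apply/eqP => /(congr1 (@q0 R)) /= /eqP; by rewrite oner_eq0. Qed.
HB.instance Definition _ := GRing.Zmodule_isNzRing.Build quat qmulA qmul1 qmulr1 qmulDl qmulDr qone_neq0.

Definition qN (q : quat) : R := q0 q ^+ 2 + q1 q ^+ 2 + q2 q ^+ 2 + q3 q ^+ 2.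
Definition qinv (q : quat) : quat :=
  Quat (q0 q / qN q) (- q1 q / qN q) (- q2 q / qN q) (- q3 q / qN q).

Lemma qN_eq0 (q : quat) : (qN q == 0) = (q == 0).
Proof.
case: q => a b c d; rewrite /qN /=. apply/eqP/eqP => [H|[-> -> -> ->]]; last by rewrite expr0n /= !addr0.
have ha : a = 0 by nra. have hb : b = 0 by nra. have hc : c = 0 by nra. have hd : d = 0 by nra.
by rewrite ha hb hc hd.
Qed.

Definition qunit : pred quat := fun q => q != 0.
Lemma qmulV : {in qunit, left_inverse 1 qinv *%R}.
Proof.
move=> [a b c d]; rewrite -topredE /= /qunit -qN_eq0 /qN /= => H.
change (qmul (qinv (Quat a b c d)) (Quat a b c d) = qone R).
apply: quat_eq; rewrite /= /qN /=; field; exact: H.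
Qed.
Lemma qmulrV : {in qunit, right_inverse 1 qinv *%R}.
Proof.
move=> [a b c d]; rewrite -topredE /= /qunit -qN_eq0 /qN /= => H.
change (qmul (Quat a b c d) (qinv (Quat a b c d)) = qone R).
apply: quat_eq; rewrite /= /qN /=; field; exact: H.
Qed.
Lemma qunitP : forall x y : quat, y * x = 1 /\ x * y = 1 -> qunit x.
Proof.
move=> x y [_ h]; rewrite /qunit; apply/eqP => hx; move: h; rewrite hx mul0r => /eqP.
by rewrite eq_sym oner_eq0.
Qed.
Lemma qinv_out : {in [predC qunit], qinv =1 id}.
Proof.
move=> x; rewrite inE /qunit /= negbK => /eqP ->.
by apply: quat_eq; rewrite /= /qN /= ?expr0n /= !addr0 ?oppr0 mul0r.
Qed.
HB.instance Definition _ := GRing.NzRing_hasMulInverse.Build quat qmulV qmulrV qunitP qinv_out.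

Lemma qunitE (q : quat) : (q \is a GRing.unit) = (q != 0). Proof. by []. Qed.

Definition sc (r : R) : quat := Quat r 0 0 0.
Lemma qconjM (a b : quat) : qconj (a * b) = qconj b * qconj a.
Proof. qring. Qed.
Lemma qconjD (a b : quat) : qconj (a + b) = qconj a + qconj b. Proof. qring. Qed.
Lemma qconjN (a : quat) : qconj (- a) = - qconj a. Proof. qring. Qed.
Lemma qconjK (a : quat) : qconj (qconj a) = a. Proof. qring. Qed.
Lemma qconj0 : qconj (0 : quat) = 0. Proof. apply: quat_eq; rewrite /= ?oppr0 //. Qed.
Lemma qconj1 : qconj (1 : quat) = 1. Proof. apply: quat_eq; rewrite /= ?oppr0 //. Qed.
Lemma qconj_sc r : qconj (sc r) = sc r. Proof. apply: quat_eq; rewrite /= ?oppr0 //. Qed.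
Lemma sc_comm r (q : quat) : sc r * q = q * sc r. Proof. qring. Qed.
Lemma mul_conj (q : quat) : q * qconj q = sc (qN q). Proof. rewrite /qN /sc; qring. Qed.
Lemma conj_mul (q : quat) : qconj q * q = sc (qN q). Proof. rewrite /qN /sc; qring. Qed.
Lemma qNM (a b : quat) : qN (a * b) = qN a * qN b.
Proof. case: a; case: b => *; rewrite /qN /=; ring. Qed.
Lemma qN_ge0 (a : quat) : 0 <= qN a.
Proof. case: a => *; rewrite /qN /=; nra. Qed.
Lemma scM r s : sc (r * s) = sc r * sc s. Proof. rewrite /sc; qring. Qed.
Lemma sc1 : sc 1 = 1. Proof. by []. Qed.
Lemma sc0 : sc 0 = 0. Proof. by []. Qed.
Lemma scN r : sc (- r) = - sc r. Proof. rewrite /sc; apply: quat_eq; rewrite /= ?oppr0 //. Qed.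
Lemma sc_inj r s : sc r = sc s -> r = s. Proof. by case. Qed.
Lemma qconj_eq0 (a : quat) : (qconj a == 0) = (a == 0).
Proof. apply/eqP/eqP => [h|->]; last exact: qconj0. by rewrite -[a]qconjK h qconj0. Qed.
Lemma qconjV (a : quat) : qconj (a^-1) = (qconj a)^-1.
Proof.
have [->|a0] := eqVneq a 0; first by rewrite invr0 qconj0 invr0.
have ua : a \is a GRing.unit by [].
have uc : qconj a \is a GRing.unit by rewrite qunitE qconj_eq0.
apply: (mulIr uc). by rewrite -qconjM mulrV // qconj1 mulVr.
Qed.
Lemma qNV (a : quat) : qN (a^-1) = (qN a)^-1.
Proof.
have [->|a0] := eqVneq a 0; first by rewrite invr0 /qN /= expr0n /= !addr0 invr0.
have := qNM a (a^-1). rewrite mulrV // /qN /= expr0n /= !addr0 expr1n => h.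
rewrite -/(qN a) -/(qN a^-1) in h *.
have na : qN a != 0 by rewrite qN_eq0.
by apply: (mulfI na); rewrite -h mulfV.
Qed.
Local Notation hvec := (hvec R).
Local Notation hmat := (hmat R).
Definition vadd (u v : hvec) : hvec := (u.1 + v.1, u.2 + v.2).

Ltac vring := repeat match goal with
  | x : hvec |- _ => destruct x
  | x : hmat |- _ => destruct x
  | x : (_ * _)%type |- _ => destruct x end;
  rewrite /vadd /vscale /mact /mmul /hform /mone /mopp /=;
  try congr (_, _); qring.

Lemma vscaleA (z : hvec) a b : vscale (vscale z a) b = vscale z (a * b).
Proof. vring. Qed.
Lemma vscale1 (z : hvec) : vscale z 1 = z.
Proof. vring. Qed.
Lemma mact_add (M : hmat) u v : mact M (vadd u v) = vadd (mact M u) (mact M v).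
Proof. vring. Qed.
Lemma mact_scale (M : hmat) u a : mact M (vscale u a) = vscale (mact M u) a.
Proof. vring. Qed.
Lemma mact_mmul (M N : hmat) u : mact (mmul M N) u = mact M (mact N u).
Proof. vring. Qed.
Lemma mact_one u : mact (mone R) u = u.
Proof. vring. Qed.
Lemma mact_opp (M : hmat) u : mact (mopp M) u = vscale (mact M u) (-1).
Proof. vring. Qed.
Lemma hform_addl (u v w : hvec) : hform (vadd u v) w = hform u w + hform v w.
Proof. vring. Qed.
Lemma hform_addr (u v w : hvec) : hform w (vadd u v) = hform w u + hform w v.
Proof. vring. Qed.
Lemma hform_scalel (u w : hvec) a : hform (vscale u a) w = hform u w * a.
Proof. vring. Qed.
Lemma hform_scaler (u w : hvec) a : hform u (vscale w a) = qconj a * hform u w.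
Proof. vring. Qed.
Lemma hform_sym (u w : hvec) : hform w u = qconj (hform u w).
Proof. vring. Qed.
Lemma mactE (M : hmat) z : mact M z = (m11 M * z.1 + m12 M * z.2, m21 M * z.1 + m22 M * z.2).
Proof. by []. Qed.
Lemma hformE (z w : hvec) : hform z w = qconj w.2 * z.1 + qconj w.1 * z.2.
Proof. by []. Qed.
Lemma vscaleE (z : hvec) l : vscale z l = (z.1 * l, z.2 * l).
Proof. by []. Qed.
Lemma mat_ext (M N : hmat) : (forall u, mact M u = mact N u) -> M = N.
Proof.
case: M => a b c d; case: N => a' b' c' d' H.
move: (H (1, 0)) (H (0, 1)); rewrite !mactE /= !mulr1 !mulr0 !addr0 !add0r.
by case=> -> -> [-> ->].
Qed.
Lemma unit_l0 (c x : quat) : c != 0 -> c * x = 0 -> x = 0.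
Proof. move=> c0 h; by rewrite -(mulKr (c0 : c \is a GRing.unit) x) h mulr0. Qed.
Lemma unit_r0 (c x : quat) : c != 0 -> x * c = 0 -> x = 0.
Proof. move=> c0 h; by rewrite -(mulrK (c0 : c \is a GRing.unit) x) h mul0r. Qed.

Lemma perp (z r : hvec) : hform z z = 0 -> z <> vzero R -> hform r z = 0 ->
  exists mu, r = vscale z mu.
Proof.
case: z => a1 a2; case: r => b1 b2; rewrite !hformE /= => hn hz hr.
have [a20|a20] := eqVneq a2 0.
  have a10 : a1 != 0 by apply/eqP => a10; apply: hz; rewrite a10 a20.
  move: hr; rewrite a20 qconj0 mul0r add0r => /(unit_l0 _); rewrite qconj_eq0 => /(_ a10) ->.
  exists (a1^-1 * b1); rewrite vscaleE /= mul0r mulVKr //.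
have c0 : qconj a2 != 0 by rewrite qconj_eq0.
set k := a1 * a2^-1.
have e1 : a1 = k * a2 by rewrite /k divrK.
have ek : qconj a1 = qconj a2 * qconj k by rewrite e1 qconjM.
have hk : k + qconj k = 0.
  apply: (unit_r0 a20); apply: (unit_l0 c0).
  by rewrite mulrDl mulrDr -e1 mulrA -ek.
have hb : b1 + qconj k * b2 = 0.
  by apply: (unit_l0 c0); rewrite mulrDr mulrA -ek.
exists (a2^-1 * b2); rewrite vscaleE /= mulVKr //; congr (_, _).
have hck : qconj k = - k by apply/eqP; rewrite -subr_eq0 opprK addrC hk.
move: hb; rewrite hck mulNr => /eqP; rewrite subr_eq0 => /eqP ->; by rewrite mulrA.
Qed.
Lemma vscale0 (z : hvec) : vscale z 0 = vzero R. Proof. vring. Qed.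
Lemma vadd0 (z : hvec) : vadd z (vzero R) = z. Proof. vring. Qed.
Lemma vadd0l (z : hvec) : vadd (vzero R) z = z. Proof. vring. Qed.
Lemma hform0l (z : hvec) : hform (vzero R) z = 0. Proof. vring. Qed.

Lemma hform_lin p1 p2 a b a' b' :
  hform (vadd (vscale p1 a) (vscale p2 b)) (vadd (vscale p1 a') (vscale p2 b')) =
  qconj a' * hform p1 p1 * a + qconj b' * hform p1 p2 * a +
  qconj a' * hform p2 p1 * b + qconj b' * hform p2 p2 * b.
Proof.
by rewrite hform_addl !hform_addr !hform_scalel !hform_scaler ?mulrA addrA.
Qed.

Section Basis.
Variables z1 z2 : hvec.
Hypothesis n1 : hform z1 z1 = 0.
Hypothesis n2 : hform z2 z2 = 0.
Hypothesis d0 : hform z1 z2 != 0.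
Let d := hform z1 z2.

Lemma z1_nz : z1 <> vzero R.
Proof. by move=> e; move: d0; rewrite /d e hform0l eqxx. Qed.

Lemma span (u : hvec) :
  u = vadd (vscale z1 (d^-1 * hform u z2)) (vscale z2 ((qconj d)^-1 * hform u z1)).
Proof.
set v := vadd _ _.
have dc0 : qconj d != 0 by rewrite qconj_eq0.
have h1 : hform v z1 = hform u z1.
  rewrite /v hform_addl !hform_scalel n1 mul0r add0r -[hform z2 z1]qconjK -hform_sym -/d.
  by rewrite mulVKr.
have h2 : hform v z2 = hform u z2.
  rewrite /v hform_addl !hform_scalel n2 mul0r addr0 -/d.
  by rewrite mulVKr.
set w := vadd u (vscale v (-1)).
have w1 : hform w z1 = 0 by rewrite /w hform_addl hform_scalel h1 mulrN1 subrr.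
have w2 : hform w z2 = 0 by rewrite /w hform_addl hform_scalel h2 mulrN1 subrr.
have [mu emu] := perp n1 z1_nz w1.
move: w2; rewrite emu hform_scalel -/d => /(unit_l0 d0) mu0.
move: emu; rewrite mu0 vscale0 /w.
clearbody v; case: u {h1 h2 w w1} => u1 u2; case: v => v1 v2; rewrite /vadd vscaleE /= !mulrN1 => e.
have e1 : u1 - v1 = 0 := congr1 fst e. have e2 : u2 - v2 = 0 := congr1 snd e.
by move/eqP: e1; rewrite subr_eq0 => /eqP ->; move/eqP: e2; rewrite subr_eq0 => /eqP ->.
Qed.

Lemma span_ex (u : hvec) : exists a b, u = vadd (vscale z1 a) (vscale z2 b).
Proof. by exists (d^-1 * hform u z2), ((qconj d)^-1 * hform u z1); exact: span. Qed.

Lemma basis_ext (M N : hmat) : mact M z1 = mact N z1 -> mact M z2 = mact N z2 -> M = N.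
Proof.
move=> e1 e2; apply: mat_ext => u; have [a [b ->]] := span_ex u.
by rewrite !mact_add !mact_scale e1 e2.
Qed.

Lemma form_pres (M : hmat) : hform (mact M z1) (mact M z1) = 0 ->
  hform (mact M z2) (mact M z2) = 0 -> hform (mact M z1) (mact M z2) = d ->
  forall u v, hform (mact M u) (mact M v) = hform u v.
Proof.
move=> m1 m2 m12 u v; have [a [b ->]] := span_ex u; have [a' [b' ->]] := span_ex v.
rewrite !mact_add !mact_scale !hform_lin m1 m2 n1 n2.
by rewrite [hform (mact M z2) _]hform_sym m12 [hform z2 z1]hform_sym.
Qed.
End Basis.

Definition Gmat (p1 p2 z1 z2 : hvec) (c1 c2 : quat) : hmat :=
  HMat (p1.1 * c1 * qconj z2.2 + p2.1 * c2 * qconj z1.2)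
       (p1.1 * c1 * qconj z2.1 + p2.1 * c2 * qconj z1.1)
       (p1.2 * c1 * qconj z2.2 + p2.2 * c2 * qconj z1.2)
       (p1.2 * c1 * qconj z2.1 + p2.2 * c2 * qconj z1.1).
Lemma mact_Gmat p1 p2 z1 z2 c1 c2 u :
  mact (Gmat p1 p2 z1 z2 c1 c2) u = vadd (vscale p1 (c1 * hform u z2)) (vscale p2 (c2 * hform u z1)).
Proof. rewrite /Gmat; vring. Qed.
Lemma vscale_inj (z : hvec) a b : z <> vzero R -> vscale z a = vscale z b -> a = b.
Proof.
case: z => z1 z2 hz; rewrite !vscaleE /= => e.
have e1 : z1 * a = z1 * b := congr1 fst e. have e2 : z2 * a = z2 * b := congr1 snd e.
have [h1|h1] := eqVneq z1 0.
  have h2 : z2 != 0 by apply/eqP => h2; apply: hz; rewrite h1 h2.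
  by rewrite -(mulKr (h2 : z2 \is a GRing.unit) a) e2 mulKr.
by rewrite -(mulKr (h1 : z1 \is a GRing.unit) a) e1 mulKr.
Qed.
Lemma vscale_nz (z : hvec) a : z <> vzero R -> a != 0 -> vscale z a <> vzero R.
Proof. move=> hz a0 e; move/eqP: a0; apply; apply: (vscale_inj hz); by rewrite e vscale0. Qed.
Lemma vscale_nz' (z : hvec) a : vscale z a <> vzero R -> a != 0.
Proof. move=> h; apply/eqP => a0; apply: h; by rewrite a0 vscale0. Qed.
Lemma mact0 (M : hmat) : mact M (vzero R) = vzero R. Proof. vring. Qed.

Lemma sl_refl (z : hvec) : same_line z z. Proof. by exists 1; rewrite vscale1. Qed.
Lemma sl_sym (z w : hvec) : w <> vzero R -> same_line z w -> same_line w z.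
Proof.
move=> hw [mu e]; have m0 : mu != 0 by apply: (@vscale_nz' z); rewrite -e.
by exists mu^-1; rewrite e vscaleA mulrV // vscale1.
Qed.
Lemma sl_trans (z w u : hvec) : same_line z w -> same_line w u -> same_line z u.
Proof. by move=> [m ->] [n ->]; exists (m * n); rewrite vscaleA. Qed.

Lemma fix_line (A : hmat) (p z : hvec) : fixes_bd A p -> null_nz z -> same_line p z -> fixes_bd A z.
Proof.
move=> [_ [l hl]] hz [mu e]; split => //.
have m0 : mu != 0 by apply: (@vscale_nz' p); rewrite -e; case: hz.
exists (mu^-1 * l * mu); rewrite e mact_scale hl !vscaleA.
by rewrite !mulrA mulrV // mul1r.
Qed.

Lemma eig_nz (A Ai : hmat) z l : is_inv A Ai -> z <> vzero R -> mact A z = vscale z l -> l != 0.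
Proof.
move=> [_ h] hz e; apply/eqP => l0; apply: hz.
by rewrite -(mact_one z) -h mact_mmul e l0 vscale0 mact0.
Qed.
Lemma eig_inv (A Ai : hmat) z l : is_inv A Ai -> l != 0 -> mact A z = vscale z l ->
  mact Ai z = vscale z l^-1.
Proof.
move=> [_ h] l0 e.
have : mact Ai (mact A z) = z by rewrite -mact_mmul h mact_one.
rewrite e mact_scale => e2.
by rewrite -{2}e2 vscaleA mulrV // vscale1.
Qed.

Lemma d_nz (z1 z2 : hvec) : null_nz z1 -> null_nz z2 -> ~ same_line z1 z2 -> hform z1 z2 != 0.
Proof.
move=> [h1 n1] [h2 n2] ns; apply/eqP => d0; apply: ns.
have e : hform z2 z1 = 0 by rewrite hform_sym d0 qconj0.
have [mu ->] := perp n1 h1 e; by exists mu.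
Qed.

Lemma other_fixed (A : hmat) (p : hvec) : hyperbolic A -> fixes_bd A p ->
  exists a, fixes_bd A a /\ ~ same_line p a.
Proof.
move=> [z1 [z2 [f1 [f2 [ns H]]]]] fp; have pnz : p <> vzero R by case: fp => [[]].
have z1nz : z1 <> vzero R by case: f1 => [[]].
case: (H p fp) => hp.
  exists z2; split => // hs; apply: ns; exact: sl_trans hp hs.
exists z1; split => // hs; apply: ns; apply: sl_sym => //; exact: sl_trans hp hs.
Qed.

Lemma two_lines (A : hmat) (p q : hvec) : hyperbolic A -> fixes_bd A p -> fixes_bd A q ->
  ~ same_line p q -> forall z, fixes_bd A z -> same_line p z \/ same_line q z.
Proof.
move=> [z1 [z2 [f1 [f2 [ns H]]]]] fp fq npq z fz.
have pnz : p <> vzero R by case: fp => [[]].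
have qnz : q <> vzero R by case: fq => [[]].
case: (H p fp) => hp; case: (H q fq) => hq.
- by exfalso; apply: npq; apply: sl_trans (sl_sym pnz hp) hq.
- case: (H z fz) => hz; [left|right]; by apply: sl_trans (sl_sym _ _) hz.
- case: (H z fz) => hz; [right|left]; by apply: sl_trans (sl_sym _ _) hz.
- by exfalso; apply: npq; apply: sl_trans (sl_sym pnz hp) hq.
Qed.
Lemma normalize (p a : hvec) : null_nz p -> null_nz a -> ~ same_line p a ->
  exists a', [/\ null_nz a', same_line a a', same_line a' a, ~ same_line p a' & hform p a' = 1].
Proof.
move=> np na ns; have d0 := d_nz np na ns.
have dc0 : qconj (hform p a) != 0 by rewrite qconj_eq0.
have anz : a <> vzero R by case: na.
set c := (qconj (hform p a))^-1.
have c0 : c != 0 by rewrite /c invr_eq0.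
have a'nz : vscale a c <> vzero R by apply: vscale_nz.
have sl1 : same_line a (vscale a c) by exists c.
have sl2 : same_line (vscale a c) a by apply: sl_sym.
exists (vscale a c); split => //.
- have na2 : hform a a = 0 := proj2 na.
  split => //; by rewrite hform_scalel hform_scaler na2 mulr0 mul0r.
- by move=> h; apply: ns; apply: sl_trans h sl2.
- by rewrite hform_scaler /c qconjV qconjK mulVr.
Qed.

Lemma qmul_neq0 (a b : quat) : a != 0 -> b != 0 -> a * b != 0.
Proof. rewrite -!qN_eq0 qNM => ha hb; by rewrite mulf_neq0. Qed.

Lemma pm_act (M N : hmat) : pm_eq M N ->
  exists e : quat, (e = 1 \/ e = -1) /\ forall u, mact M u = vscale (mact N u) e.
Proof.
case=> ->; [exists 1; split; [by left|move=> u; by rewrite vscale1]|].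
exists (-1); split; [by right| move=> u; exact: mact_opp].
Qed.

Lemma sign_sq (e : quat) : (e = 1 \/ e = -1) -> e * e = 1.
Proof. by case=> ->; rewrite ?mulr1 ?mulrNN ?mulr1. Qed.
Lemma sign_nz (e : quat) : (e = 1 \/ e = -1) -> e != 0.
Proof. by case=> ->; rewrite ?oppr_eq0 oner_eq0. Qed.
Lemma sign_N (e : quat) : (e = 1 \/ e = -1) -> qN e = 1.
Proof.
case=> ->; rewrite /qN /=; first by rewrite expr1n expr0n /= !addr0.
by rewrite /= !oppr0 sqrrN expr1n expr0n /= !addr0.
Qed.

Lemma conj_fixed (G Gi A Ai : hmat) (e : quat) (p : hvec) :
  is_inv G Gi -> (forall z w, hform (mact G z) (mact G w) = hform z w) ->
  is_inv A Ai -> (e = 1 \/ e = -1) ->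
  (forall u, mact (mmul (mmul G A) Gi) u = vscale (mact Ai u) e) ->
  fixes_bd A p -> fixes_bd A (mact G p).
Proof.
move=> [hG1 hG2] fG iA he hc [[pnz pn] [l hl]].
have GiG : mact Gi (mact G p) = p by rewrite -mact_mmul hG2 mact_one.
split.
  split; last by rewrite fG.
  by move=> h; apply: pnz; rewrite -GiG h mact0.
have l0 := eig_nz iA pnz hl.
have e1 : vscale (mact Ai (mact G p)) e = vscale (mact G p) l.
  by rewrite -hc !mact_mmul GiG hl mact_scale.
have e2 : mact Ai (mact G p) = vscale (mact G p) (l * e).
  by rewrite -vscaleA -e1 vscaleA (sign_sq he) vscale1.
have le0 : l * e != 0 by rewrite qmul_neq0 ?(sign_nz he).
exists (l * e)^-1.
have : mact A (mact Ai (mact G p)) = mact G p by rewrite -mact_mmul (proj1 iA) mact_one.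
rewrite e2 mact_scale => e3.
by rewrite -{2}e3 vscaleA mulrV // vscale1.
Qed.
Lemma pair_eq2 (a b c d : quat) : (a, b) = (c, d) -> a = c /\ b = d.
Proof. move=> e; exact: (conj (congr1 fst e) (congr1 snd e)). Qed.

Lemma vs1 (p w : hvec) c m : vadd p (vscale w c) = vscale p m -> vscale w c = vscale p (m - 1).
Proof.
case: p => p1 p2; case: w => w1 w2; rewrite /vadd !vscaleE /= => /pair_eq2 [e1 e2].
by rewrite !mulrBr !mulr1 -e1 -e2 (addrC p1) (addrC p2) !addrK.
Qed.
Lemma vs2 (p w : hvec) c m : vadd p (vscale w c) = vscale w m -> p = vscale w (m - c).
Proof.
case: p => p1 p2; case: w => w1 w2; rewrite /vadd !vscaleE /= => /pair_eq2 [e1 e2].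
by rewrite !mulrBr -e1 -e2 !addrK.
Qed.
Lemma vs0 (p w : hvec) c : vadd p (vscale w c) = vzero R -> p = vscale w (- c).
Proof. move=> e; rewrite -[- c]add0r; apply: vs2; by rewrite e vscale0. Qed.

Lemma rev_norm (G Gi A Ai : hmat) (e : quat) (p : hvec) l mu :
  is_inv G Gi -> is_inv A Ai -> (e = 1 \/ e = -1) ->
  (forall u, mact (mmul (mmul G A) Gi) u = vscale (mact Ai u) e) ->
  p <> vzero R -> mact A p = vscale p l -> mact G p = vscale p mu -> mu != 0 -> qN l = 1.
Proof.
move=> [hG1 hG2] iA he hc pnz hl hm mu0.
have l0 := eig_nz iA pnz hl.
have GiG : mact Gi (mact G p) = p by rewrite -mact_mmul hG2 mact_one.
have := hc (mact G p); rewrite !mact_mmul GiG hl mact_scale hm mact_scale (eig_inv iA l0 hl).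
rewrite !vscaleA => /(vscale_inj pnz) /(congr1 qN).
rewrite !qNM (sign_N he) mulr1 qNV => h.
have n0 : qN mu != 0 by rewrite qN_eq0.
have nl0 : qN l != 0 by rewrite qN_eq0.
have h3 : qN l = (qN l)^-1 by apply: (mulfI n0); rewrite h mulrC.
have h2 : qN l * qN l = 1 by rewrite {2}h3 mulfV.
have := qN_ge0 l; nra.
Qed.

Lemma exists_comm (l : quat) : exists y : quat, [/\ y != 0, qconj y = - y & y * l = l * y].
Proof.
case: l => a b c d.
have [h|h] := eqVneq (Quat 0 b c d) 0.
  exists (Quat 0 1 0 0); split.
  - by apply/eqP => /(congr1 (@q1 R)) /= /eqP; rewrite oner_eq0.
  - by apply: quat_eq; rewrite /= ?oppr0.
  - have hb : b = 0 := congr1 (@q1 R) h. have hc : c = 0 := congr1 (@q2 R) h.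
    have hd : d = 0 := congr1 (@q3 R) h.
    rewrite hb hc hd; qring.
exists (Quat 0 b c d); split => //.
- by apply: quat_eq; rewrite /= ?oppr0.
- qring.
Qed.

Lemma vscale_add (p w : hvec) a b c :
  vadd (vscale p a) (vscale w (b * c)) = vscale (vadd p (vscale w b)) a -> True.
Proof. by []. Qed.

Lemma vadd_scale (p w : hvec) y l :
  vscale (vadd p (vscale w y)) l = vadd (vscale p l) (vscale w (y * l)).
Proof. vring. Qed.

Lemma hyp_norm (A Ai : hmat) (p : hvec) l :
  hyperbolic A -> is_inv A Ai -> (forall z w, hform (mact A z) (mact A w) = hform z w) ->
  fixes_bd A p -> mact A p = vscale p l -> qN l = 1 -> False.
Proof.
move=> hA iA fA fp hl nl.
have [a [fa nsa]] := other_fixed hA fp.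
have [a' [na' sl1 sl2 ns' h1]] := normalize (proj1 fp) (proj1 fa) nsa.
have fa' : fixes_bd A a' := fix_line fa na' sl1.
have [_ [k hk]] := fa'.
have pnz : p <> vzero R by case: fp => [[]].
have hpp : hform p p = 0 := proj2 (proj1 fp).
have haa : hform a' a' = 0 := proj2 na'.
have hf : qconj k * l = 1.
  by have := fA p a'; rewrite hl hk hform_scalel hform_scaler h1 mulr1.
have kl : k = l.
  rewrite -[k]qconjK -[l]qconjK; congr qconj.
  have ll : l * qconj l = 1 by rewrite mul_conj nl.
  by rewrite -[qconj k]mulr1 -ll mulrA hf mul1r.
have [y [y0 yc yl]] := exists_comm l.
set u := vadd p (vscale a' y).
have Au : mact A u = vscale u l.
  by rewrite /u mact_add mact_scale hl hk vscaleA kl -yl vadd_scale.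
have un : hform u u = 0.
  rewrite /u -[p in vadd p _]vscale1 hform_lin hpp haa h1 [hform a' p]hform_sym h1 qconj1 yc.
  by rewrite !mulr0 !mul0r !mulr1 !mul1r addr0 add0r addNr.
have unz : u <> vzero R.
  move=> /vs0 e; apply: ns'; apply: sl_sym => //; by exists (- y).
have fu : fixes_bd A u by split => //; exists l.
case: (two_lines hA fp fa' ns' fu) => [[m /vs1 e]|[m /vs2 e]]; apply: ns'.
- exists ((m - 1) * y^-1); by rewrite -vscaleA -e vscaleA mulrV // vscale1.
- apply: sl_sym => //; by exists (m - y).
Qed.
Lemma classic_or (P : Prop) : P \/ ~ P.
Proof. exact: Classical_Prop.classic. Qed.

Lemma dir1 (A B : hmat) : Sp11 A -> Sp11 B -> hyperbolic A -> hyperbolic B ->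
  (exists z, fixes_bd A z /\ fixes_bd B z) ->
  strongly_doubly_reversible A B -> forall z, fixes_bd A z <-> fixes_bd B z.
Proof.
move=> [_ fA] [_ fB] hA hB [z0 [fa fb]] [G [Gi [Ai [Bi [[_ fG] [iG [iA [iB [_ [hA' hB']]]]]]]]]].
have [eA [heA hcA]] := pm_act hA'.
have [eB [heB hcB]] := pm_act hB'.
have qa := conj_fixed iG fG iA heA hcA fa.
have qb := conj_fixed iG fG iB heB hcB fb.
have z0nz : z0 <> vzero R by case: fa => [[]].
have [[mu hm]|ns] := classic_or (same_line z0 (mact G z0)).
  have mu0 : mu != 0 by apply: (@vscale_nz' z0); rewrite -hm; case: qa => [[]].
  have [_ [l hl]] := fa.
  have nl := rev_norm iG iA heA hcA z0nz hl hm mu0.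
  by case: (hyp_norm hA iA fA fa hl nl).
move=> z; split => fz.
  case: (two_lines hA fa qa ns fz) => hz; [exact: fix_line fb (proj1 fz) hz|exact: fix_line qb (proj1 fz) hz].
case: (two_lines hB fb qb ns fz) => hz; [exact: fix_line fa (proj1 fz) hz|exact: fix_line qa (proj1 fz) hz].
Qed.
Lemma quat_eq0 (a b c d : R) : Quat a b c d = 0 -> [/\ a = 0, b = 0, c = 0 & d = 0].
Proof. move=> e; split; [exact: (congr1 (@q0 R) e)|exact: (congr1 (@q1 R) e)|exact: (congr1 (@q2 R) e)|exact: (congr1 (@q3 R) e)]. Qed.

Lemma perp3 (v1 v2 v3 w1 w2 w3 : R) : exists x : quat,
  [/\ q0 x = 0, x != 0, q1 x * v1 + q2 x * v2 + q3 x * v3 = 0 & q1 x * w1 + q2 x * w2 + q3 x * w3 = 0].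
Proof.
have [h|h] := eqVneq (Quat 0 (v2 * w3 - v3 * w2) (v3 * w1 - v1 * w3) (v1 * w2 - v2 * w1)) 0; last first.
  by exists (Quat 0 (v2 * w3 - v3 * w2) (v3 * w1 - v1 * w3) (v1 * w2 - v2 * w1)); split => //=; ring.
have [_ c1 c2 c3] := quat_eq0 h.
have [h2|h2] := eqVneq (Quat 0 0 v3 (- v2)) 0; last first.
  by exists (Quat 0 0 v3 (- v2)); split => //=; lra.
have [_ _ ev3 ev2] := quat_eq0 h2; move/eqP: ev2; rewrite oppr_eq0 => /eqP ev2.
have [v10|v10] := eqVneq v1 0.
  have [h3|h3] := eqVneq (Quat 0 0 w3 (- w2)) 0; last first.
    by exists (Quat 0 0 w3 (- w2)); split => //=; rewrite ?v10 ?ev2 ?ev3; lra.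
  have [_ _ ew3 ew2] := quat_eq0 h3; move/eqP: ew2; rewrite oppr_eq0 => /eqP ew2.
  exists (Quat 0 0 1 0); split => //=; last by rewrite ew2 ew3; lra.
    by apply/eqP => /quat_eq0 [_ _ /eqP]; rewrite oner_eq0.
  by rewrite ev2 ev3; lra.
have w30 : w3 = 0.
  move: c2; rewrite ev3 mul0r sub0r => /eqP; rewrite oppr_eq0 mulf_eq0 (negbTE v10) /= => /eqP //.
exists (Quat 0 0 0 1); split => //=; last by rewrite w30; lra.
  by apply/eqP => /quat_eq0 [_ _ _ /eqP]; rewrite oner_eq0.
by rewrite ev3; lra.
Qed.

Lemma pure_anti (x l : quat) : q0 x = 0 -> q1 x * q1 l + q2 x * q2 l + q3 x * q3 l = 0 ->
  x * l = qconj l * x.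
Proof.
case: x => a b c d; case: l => a' b' c' d' /= -> h.
apply: quat_eq => /=; lra.
Qed.

Lemma exists_x (l b : quat) : exists x : quat,
  [/\ x != 0, qconj x = - x, x * l = qconj l * x & x * b = qconj b * x].
Proof.
have [x [x0 xn hl hb]] := perp3 (q1 l) (q2 l) (q3 l) (q1 b) (q2 b) (q3 b).
exists x; split => //; last by apply: pure_anti.
  by case: x x0 {xn hl hb} => a b' c d /= ->; apply: quat_eq; rewrite /= ?oppr0.
by apply: pure_anti.
Qed.
Lemma S1 (x l k : quat) : x != 0 -> l != 0 -> x * l = qconj l * x -> k = (qconj l)^-1 ->
  x^-1 * k * x = l^-1.
Proof.
move=> x0 l0 hx ->.
have ux : x \is a GRing.unit by []. have ul : l \is a GRing.unit by [].
have ucl : qconj l \is a GRing.unit by rewrite qunitE qconj_eq0.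
have e : (qconj l)^-1 * x = x * l^-1.
  by rewrite -[x in LHS](mulrK ul) hx mulrA (mulKr ucl).
by rewrite -mulrA e (mulKr ux).
Qed.
Lemma S2 (x l : quat) : x != 0 -> x * l = qconj l * x -> x * l * x^-1 = qconj l.
Proof. move=> x0 hx; by rewrite hx mulrK. Qed.

Lemma conj_rel (k l : quat) : qconj k * l = 1 -> k = (qconj l)^-1.
Proof.
move=> h.
have h' : qconj l * k = 1 by rewrite -[k]qconjK -qconjM h qconj1.
have l0 : qconj l != 0 by apply/eqP => e; move: h'; rewrite e mul0r => /eqP; rewrite eq_sym oner_eq0.
by rewrite -[k](mulKr (l0 : qconj l \is a GRing.unit)) h' mulr1.
Qed.

Lemma rev_mat (z1 z2 : hvec) (G A Ai : hmat) (x l k : quat) :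
  hform z1 z1 = 0 -> hform z2 z2 = 0 -> hform z1 z2 = 1 ->
  mact G z1 = vscale z2 x -> mact G z2 = vscale z1 (- x^-1) ->
  is_inv A Ai -> (forall z w, hform (mact A z) (mact A w) = hform z w) ->
  mact A z1 = vscale z1 l -> mact A z2 = vscale z2 k -> x != 0 -> x * l = qconj l * x ->
  mmul (mmul G A) (mopp G) = Ai.
Proof.
move=> n1 n2 h12 G1 G2 iA fA hl hk x0 hx.
have d0 : hform z1 z2 != 0 by rewrite h12 oner_eq0.
have z1nz := z1_nz d0.
have z2nz : z2 <> vzero R by move=> e; move: d0; rewrite e hform_sym hform0l qconj0 eqxx.
have l0 := eig_nz iA z1nz hl. have k0 := eig_nz iA z2nz hk.
have hkl : qconj k * l = 1.
  by have := fA z1 z2; rewrite hl hk hform_scalel hform_scaler h12 mulr1.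
have ek := conj_rel hkl.
apply: (basis_ext n1 n2 d0); rewrite !mact_mmul mact_opp.
  rewrite G1 !mact_scale hk mact_scale G2 !vscaleA (eig_inv iA l0 hl).
  congr vscale; rewrite !mulrA mulrN1 !mulNr opprK; exact: S1.
rewrite G2 !mact_scale hl mact_scale G1 !vscaleA (eig_inv iA k0 hk).
congr vscale; rewrite !mulrA mulrN1 mulrN opprK (S2 x0 hx) ek invrK //.
Qed.
Lemma dir2 (A B : hmat) : Sp11 A -> Sp11 B -> hyperbolic A ->
  (forall z, fixes_bd A z <-> fixes_bd B z) -> strongly_doubly_reversible A B.
Proof.
move=> [[Ai iA] fA] [[Bi iB] fB] [z1 [z2 [f1 [f2 [ns _]]]]] hAB.
have [z2' [n2' sl1 sl2 ns' h12]] := normalize (proj1 f1) (proj1 f2) ns.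
have f2' := fix_line f2 n2' sl1.
have g1 := (hAB z1).1 f1. have g2 := (hAB z2').1 f2'.
have [_ [l hl]] := f1. have [_ [k hk]] := f2'.
have [_ [b hb]] := g1. have [_ [dd hd]] := g2.
have n1 : hform z1 z1 = 0 := proj2 (proj1 f1).
have n2 : hform z2' z2' = 0 := proj2 n2'.
have d0 : hform z1 z2' != 0 by rewrite h12 oner_eq0.
have [x [x0 xc xl xb]] := exists_x l b.
have ux : x \is a GRing.unit by [].
set G := Gmat (vscale z2' x) (vscale z1 (- x^-1)) z1 z2' 1 1.
have G1 : mact G z1 = vscale z2' x.
  by rewrite /G mact_Gmat h12 n1 !mul1r vscale0 vadd0 vscale1.
have G2 : mact G z2' = vscale z1 (- x^-1).
  by rewrite /G mact_Gmat n2 hform_sym h12 qconj1 !mul1r vscale0 vadd0l vscale1.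
have GG1 : mact G (mact G z1) = vscale z1 (-1).
  by rewrite G1 mact_scale G2 vscaleA mulNr mulVr.
have GG2 : mact G (mact G z2') = vscale z2' (-1).
  by rewrite G2 mact_scale G1 vscaleA mulrN mulrV.
have NN : forall z : hvec, vscale (vscale z (-1)) (-1) = z.
  by move=> z; rewrite vscaleA mulrNN mulr1 vscale1.
have GGm : mmul G G = mopp (mone R).
  by apply: (basis_ext n1 n2 d0); rewrite mact_mmul mact_opp mact_one.
have iG : is_inv G (mopp G).
  split; apply: (basis_ext n1 n2 d0); rewrite mact_mmul mact_opp ?mact_scale mact_one ?GG1 ?GG2 //.
have fG : forall z w, hform (mact G z) (mact G w) = hform z w.
  apply: (form_pres n1 n2 d0).
  - by rewrite G1 hform_scalel hform_scaler n2 mulr0 mul0r.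
  - by rewrite G2 hform_scalel hform_scaler n1 mulr0 mul0r.
  rewrite G1 G2 hform_scalel hform_scaler hform_sym h12 qconj1 mulr1 qconjN qconjV xc.
  by rewrite invrN opprK mulVr.
exists G, (mopp G), Ai, Bi; split; first by split => //; exists (mopp G).
do 4 (split => //); first by right.
split; left.
  exact: (rev_mat n1 n2 h12 G1 G2 iA fA hl hk x0 xl).
exact: (rev_mat n1 n2 h12 G1 G2 iB fB hb hd x0 xb).
Qed.
End Q.

Theorem proposition6p1 (R : realType) (A B : hmat R) :
  Sp11 A -> Sp11 B -> hyperbolic A -> hyperbolic B ->
  (exists z, fixes_bd A z /\ fixes_bd B z) ->
  (strongly_doubly_reversible A B <->
   (forall z, fixes_bd A z <-> fixes_bd B z)).
Proof.
move=> sA sB hA hB hz; split; first exact: dir1.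
exact: dir2.
Qed.
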